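(* Let $\mathfrak{F}=\langle W,\{W_{\mathfrak{d}^{\alpha_i}_j}\},\{W_{\mathfrak{e}^{\alpha_i}}\},R_\Box,R_{\mathsf{A}},R_\blacksquare,R_{\mathsf{H}}\rangle$ be any $\mathsf{TLAE}$-frame. Then for every $w\in W$: $(w,w)\notin R_\blacksquare$, $(w,w)\notin R_\Box$, $(w,w)\notin R_{\mathsf{H}}$, and $(w,w)\notin R_{\mathsf{A}}$.
   Context: Fix finite sets $\mathtt{Action}=\{\delta_1,\dots,\delta_n\}$ (atomic action types) and $\mathtt{Agent}=\{\alpha_1,\dots,\alpha_m\}$ (agents). The set $\mathtt{Action}^*$ of action types is generated by $\Delta::=\delta_j\mid\Delta\cup\Delta\mid\overline{\Delta}$. For each agent $\alpha_i$ and each $j$ there is a propositional constant $\mathfrak{d}^{\alpha_i}_j$ and for each agent $\alpha_i$ a propositional constant $\mathfrak{e}^{\alpha_i}$. The translation $t$ is: $t(\delta_j^{\alpha_i})=\mathfrak{d}^{\alpha_i}_j$, $t(\overline{\Delta}^{\alpha_i})=\neg t(\Delta^{\alpha_i})$, $t(\Delta^{\alpha_i}\cup\Gamma^{\alpha_k})=t(\Delta^{\alpha_i})\vee t(\Gamma^{\alpha_k})$. An $\mathcal{L}$-frame is a tuple $\langle W,\{W_{\mathfrak{d}^{\alpha_i}_j}\}_{i,j},\{W_{\mathfrak{e}^{\alpha_i}}\}_{i},R_\Box,R_{\mathsf{A}},R_\blacksquare,R_{\mathsf{H}}\rangle$ where $W$ is a set of moments, each $W_{\mathfrak{d}^{\alpha_i}_j},W_{\mathfrak{e}^{\alpha_i}}\subseteq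 W$, and $R_\Box,R_{\mathsf{A}},R_\blacksquare,R_{\mathsf{H}}$ are binary relations on $W$. For action types define $W_{t(\delta_j^{\alpha_i})}=W_{\mathfrak{d}^{\alpha_i}_j}$, $W_{t(\overline{\Delta}^{\alpha_i})}=W\setminus W_{t(\Delta^{\alpha_i})}$, $W_{t(\Delta^{\alpha_i}\cup\Gamma^{\alpha_k})}=W_{t(\Delta^{\alpha_i})}\cup W_{t(\Gamma^{\alpha_k})}$. A $\mathsf{TLAE}$-frame is an $\mathcal{L}$-frame satisfying: (pA3) if $R_{\mathsf{A}}wu$ and $R_{\mathsf{A}}wv$ then $u=v$; (pA4) if $R_{\mathsf{A}}wu$ then $R_\Box wu$; (pA5) for every $w$, all pairwise distinct agents $\alpha_{1},\dots,\alpha_{k}$ and (not necessarily distinct) $\Delta_1,\dots,\Delta_k\in\mathtt{Action}^*$: if for each $i$ there is $u_i$ with $R_\Box wu_i$ and $u_i\in W_{t(\Delta_i^{\alpha_i})}$, then there is $v$ with $R_\Box wv$ and $v\in W_{t(\Delta_1^{\alpha_1})}\cap\dots\cap W_{t(\Delta_k^{\alpha_k})}$; (pA6) for every $w$ and agent $\alpha_i$: if some $v$ with $R_\Box wv$ lies in $W_{\mathfrak{e}^{\alpha_i}}$, then some $u$ with $R_\Box wu$ lies outside $W_{\mathfrak{e}^{\alpha_i}}$; (pA10;A11) $R_\Box wv$ iff $R_\blacksquare vw$; (pA12) if $R_\blacksquare wu$ and $R_\blacksquare wv$ then $u=v$; (pA9;A14) $R_{\mathsf{H}}$ is the transitive closure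 of $R_\blacksquare$; (pA13) for every $w$, either there is no $v$ with $R_{\mathsf{H}}wv$, or there is $u$ with $R_{\mathsf{H}}wu$ such that there is no $z$ with $R_{\mathsf{H}}uz$. *)

(* Defs.v *)
From mathcomp Require Import all_boot.
From Stdlib Require Import Relations.
From Stdlib Require List.
Set Implicit Arguments. Unset Strict Implicit. Unset Printing Implicit Defensive.

Inductive actType (n : nat) : Type :=
  | AAtom : 'I_n -> actType n
  | AUnion : actType n -> actType n -> actType n
  | ACompl : actType n -> actType n.

(* An L-frame for n atomic action types and m agents.  Subsets of W are
   predicates W -> Prop; relations are W -> W -> Prop. *)
Record LFrame (n m : nat) : Type := {
  W : Type;
  Wd : 'I_m -> 'I_n -> W -> Prop;
  We : 'I_m -> W -> Prop;
  RBox : W -> W -> Prop;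
  RA : W -> W -> Prop;
  RBlack : W -> W -> Prop;
  RH : W -> W -> Prop
}.
Arguments W {n m} l.
Arguments Wd {n m} l _ _ _.
Arguments We {n m} l _ _.
Arguments RBox {n m} l _ _.
Arguments RA {n m} l _ _.
Arguments RBlack {n m} l _ _.
Arguments RH {n m} l _ _.

Fixpoint actSet n m (F : LFrame n m) (a : 'I_m) (D : actType n) : W F -> Prop :=
  match D with
  | AAtom j => Wd F a j
  | AUnion D1 D2 => fun w => @actSet n m F a D1 w \/ @actSet n m F a D2 w
  | ACompl D1 => fun w => ~ @actSet n m F a D1 w
  end.
Arguments actSet {n m} F a D _.

Definition TLAE_frame n m (F : LFrame n m) : Prop :=
  (forall w u v, RA F w u -> RA F w v -> u = v) /\
  (forall w u, RA F w u -> RBox F w u) /\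
  (forall (w : W F) (s : seq ('I_m * actType n)),
      0 < size s -> uniq (map fst s) ->
      (forall p, Stdlib.Lists.List.In p s -> exists u, RBox F w u /\ actSet F p.1 p.2 u) ->
      exists v, RBox F w v /\ (forall p, Stdlib.Lists.List.In p s -> actSet F p.1 p.2 v)) /\
  (forall (w : W F) (a : 'I_m),
      (exists v, RBox F w v /\ We F a v) -> exists u, RBox F w u /\ ~ We F a u) /\
  (forall w v, RBox F w v <-> RBlack F v w) /\
  (forall w u v, RBlack F w u -> RBlack F w v -> u = v) /\
  (forall w v, RH F w v <-> clos_trans (W F) (RBlack F) w v) /\
  (forall w, (forall v, ~ RH F w v) \/
             exists u, RH F w u /\ forall z, ~ RH F u z).

(* Main.v *)
Require Import Defs.
From mathcomp Require Import all_boot.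
From Stdlib Require Import Relations.

Lemma ct_decomp (A : Type) (R : A -> A -> Prop) a b :
  clos_trans A R a b -> exists c, R a c /\ (c = b \/ clos_trans A R c b).
Proof.
  induction 1 as [x y H|x y z H1 IH1 H2 IH2].
  - exists y; auto.
  - destruct IH1 as [c [Hc [Hcy|Hcy]]].
    + subst. exists y; split; auto.
    + exists c; split; auto. right; eapply t_trans; eauto.
Qed.

Arguments ct_decomp {A R a b}.

Lemma ct_return (A : Type) (R : A -> A -> Prop)
  (Hf : forall w u v, R w u -> R w v -> u = v) w :
  clos_trans A R w w -> forall x, clos_trans A R w x -> clos_trans A R x w.
Proof.
  intros Hww x Hx. apply clos_trans_tn1 in Hx.
  induction Hx as [y Hy|y z Hyz Hy IH].
  - destruct (ct_decomp Hww) as [c [Hc [Hcw|Hcw]]].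
    + subst; rewrite (Hf _ _ _ Hy Hc); exact Hww.
    + rewrite (Hf _ _ _ Hy Hc); exact Hcw.
  - destruct (ct_decomp IH) as [c [Hc [Hcw|Hcw]]].
    + subst; rewrite (Hf _ _ _ Hyz Hc); exact Hww.
    + rewrite (Hf _ _ _ Hyz Hc); exact Hcw.
Qed.

Arguments ct_return {A R} Hf {w}.

Theorem mainTheorem1 (n m : nat) (F : LFrame n m) :
  TLAE_frame F ->
  forall w : W F,
    ~ RBlack F w w /\ ~ RBox F w w /\ ~ RH F w w /\ ~ RA F w w.
Proof.
  intros [H3 [H4 [H5 [H6 [H10 [H12 [H9 H13]]]]]]] w.
  assert (HH : ~ RH F w w).
  { intro Hw. pose proof Hw as Hw'. apply H9 in Hw'.
    destruct (H13 w) as [Hn|[u [Hu Hz]]].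
    - exact (Hn w Hw).
    - apply H9 in Hu. apply (Hz w). apply H9.
      exact (ct_return H12 Hw' u Hu). }
  assert (HB : ~ RBlack F w w).
  { intro Hb. apply HH, H9. now apply t_step. }
  assert (HX : ~ RBox F w w).
  { intro Hb. apply HB, H10, Hb. }
  repeat split; auto.
Qed.
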